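(* Let $k\ge 3$ and let $\mathcal{V}$ and $\tilde{\mathcal{V}}$ be two one-parameter arrays (rays) of type $(k,n)$, written in terms of their columns as $\mathcal{V}=[\mathcal{T}^{(1)},\ldots,\mathcal{T}^{(n)}]$ and $\tilde{\mathcal{V}}=[\tilde{\mathcal{T}}^{(1)},\ldots,\tilde{\mathcal{T}}^{(n)}]$. Then $\mathcal{V}$ and $\tilde{\mathcal{V}}$ are compatible if and only if, for every $i=1,\ldots,n$, the columns $\mathcal{T}^{(i)}$ and $\tilde{\mathcal{T}}^{(i)}$ are compatible as rays of type $(k-1,n-1)$ on the label set $\{1,\ldots,n\}\setminus\{i\}$.
   Context: Labels carry the cyclic order $1<\cdots<n$. A planar Feynman diagram on a label set $L$ is a tree with leaves labelled by $L$, internal vertices of degree at least 3, planar for the induced cyclic order, with nonnegative internal edge lengths, giving a tree metric $d_{ab}$. For $2\le k<n$ and a label set $N$ with $|N|=n$, an array of type $(k,n)$ on $N$ assigns to every $(k-2)$-subset $\{i_1,\ldots,i_{k-2}\}\subseteq N$ a planar Feynman diagram $\mathcal{V}_{i_1\ldots i_{k-2}}$ on $N\setminus\{i_1,\ldots,i_{k-2}\}$ with metric $d^{(i_1\ldots i_{k-2})}_{ab}$, such that $\pi_{i_1\ldots i_k}:=d^{(i_1\ldots i_{k-2})}_{i_{k-1}i_k}$ is totally symmetric in all $k$ indices (for $k=2$ an array is a single tree on $N$). Metrics are considered modulo $\pi_{I}\sim\pi_I+\sum_{i\in I}w_i$ for arbitrary reals $w_i$. A one-parameter array (ray) is an array whose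 metric is $\pi=x\,V$ for a fixed tensor $V$ and a single parameter $x>0$. Two rays with tensors $V,W$ of the same type are compatible if for all $x,y>0$ the tensor $xV+yW$ is, up to $\sim$, the metric of an array of that type (diagrams not necessarily cubic). The $i$-th column of an array $\mathcal{V}$ of type $(k,n)$ is the array $\mathcal{T}^{(i)}$ of type $(k-1,n-1)$ on $N\setminus\{i\}$ given by $\mathcal{T}^{(i)}_{i_2\ldots i_{k-2}}:=\mathcal{V}_{i\,i_2\ldots i_{k-2}}$ (for $k=3$ it is the single tree $\mathcal{V}_i$). *)

(* Defs.v *)
From HB Require Import structures.
From mathcomp Require Import all_boot all_order all_algebra.
From mathcomp Require Import reals.
Set Implicit Arguments. Unset Strict Implicit. Unset Printing Implicit Defensive.
Import Order.TTheory GRing.Theory Num.Theory.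
Local Open Scope ring_scope.

(* Labels are elements of 'I_m, carrying the (cyclic) order 0 < 1 < ... < m-1
   (a relabelling of 1 < ... < m).  A label set is a  L : {set 'I_m}, with the
   induced cyclic order. *)

Definition cyc_interval (m : nat) (L A : {set 'I_m}) : Prop :=
  exists a b : 'I_m,
    A = [set x in L | (a <= x <= b)%N] \/ A = [set x in L | ~~ (a <= x <= b)%N].

(* Two splits  A | L\A  and  B | L\B  of L are compatible (= can be edges of
   one tree): one of the four "quadrants" is empty. *)
Definition splits_compatible (m : nat) (L A B : {set 'I_m}) : Prop :=
  [|| A :&: B == set0, A \subset B, B \subset A | L \subset A :|: B].

(* A planar Feynman diagram on L, encoded by its split system: every edge of a
   tree with leaf set L (internal vertices of degree >= 3) is determined by the
   split A | L\A of the leaves it induces; the tree is planar for the induced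
   cyclic order iff every such A is a cyclic interval of L; the splits of a tree
   are pairwise compatible, and every pairwise compatible split system comes from
   a unique such tree (Buneman).  'len A' is the length (>= 0) of the internal
   edge with side A (0 if there is no such edge), 'lf a' the length of the leaf
   edge at a (arbitrary real).  The tree metric is the sum of the lengths of the
   edges on the path from a to b, i.e. the edges whose split separates a and b.
   [planar_tree_metric L d] says that d (on distinct a, b in L) is the metric
   of some planar Feynman diagram on L. *)
Definition planar_tree_metric (R : realType) (m : nat) (L : {set 'I_m})
    (d : 'I_m -> 'I_m -> R) : Prop :=
  exists (len : {set 'I_m} -> R) (lf : 'I_m -> R),
    [/\ forall A, len A != 0 -> A \subset L /\ cyc_interval L A,
        forall A, 0 <= len A,
        forall A B, len A != 0 -> len B != 0 -> splits_compatible L A B &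
        forall a b, a \in L -> b \in L -> a != b ->
          d a b = lf a + lf b +
                  \sum_(A : {set 'I_m} | (a \in A) != (b \in A)) len A].

(* An array of type (k, #|N|) on N assigns to every
   (k-2)-subset J of N a planar diagram on N \ J with metric d^(J) such that
   pi_{i_1..i_k} := d^(J)_{i_{k-1} i_k} is totally symmetric, i.e. depends only
   on the k-set {i_1,...,i_k}.  We therefore represent the array by its metric
   pi : {set 'I_m} -> R (only its values on k-subsets of N matter), and
   [is_array k N pi] says that for every (k-2)-subset J of N the function
   (a,b) |-> pi (J ∪ {a,b}) is the metric of a planar Feynman diagram on N\J. *)
Definition is_array (R : realType) (m k : nat) (N : {set 'I_m})
    (pi : {set 'I_m} -> R) : Prop :=
  forall J : {set 'I_m}, J \subset N -> #|J| = (k - 2)%N ->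
    planar_tree_metric (N :\: J) (fun a b => pi (J :|: [set a; b])).

Definition metric_equiv (R : realType) (m k : nat) (N : {set 'I_m})
    (pi pi' : {set 'I_m} -> R) : Prop :=
  exists w : 'I_m -> R, forall I : {set 'I_m}, I \subset N -> #|I| = k ->
    pi' I = pi I + \sum_(i in I) w i.

Definition is_ray (R : realType) (m k : nat) (N : {set 'I_m})
    (V : {set 'I_m} -> R) : Prop :=
  forall x : R, 0 < x -> is_array k N (fun I => x * V I).

Definition rays_compatible (R : realType) (m k : nat) (N : {set 'I_m})
    (V W : {set 'I_m} -> R) : Prop :=
  forall x y : R, 0 < x -> 0 < y ->
    exists pi : {set 'I_m} -> R,
      is_array k N pi /\ metric_equiv k N pi (fun I => x * V I + y * W I).

Definition column (R : realType) (m : nat) (i : 'I_m)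
    (V : {set 'I_m} -> R) : {set 'I_m} -> R :=
  fun I => V (i |: I).

(* Main.v *)
Require Import Defs.
From HB Require Import structures.
From mathcomp Require Import all_boot all_order all_algebra.
From mathcomp Require Import reals.
From mathcomp Require Import zify ring.
Import Order.TTheory GRing.Theory Num.Theory.
Local Open Scope ring_scope.

Lemma ptm_shift (R : realType) (m : nat) (L : {set 'I_m}) (d d' : 'I_m -> 'I_m -> R)
  (g : 'I_m -> R) :
  planar_tree_metric L d ->
  (forall a b, a \in L -> b \in L -> a != b -> d' a b = d a b + g a + g b) ->
  planar_tree_metric L d'.
Proof.
move=> [len [lf [H1 H2 H3 H4]]] Hd.
exists len, (fun a => lf a + g a); split => // a b aL bL ab.
rewrite Hd // H4 //.
by ring.
Qed.

Theorem theorem2p3 (R : realType) (n k : nat) :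
  (3 <= k)%N -> (k < n)%N ->
  forall V W : {set 'I_n} -> R,
    is_ray k [set: 'I_n] V -> is_ray k [set: 'I_n] W ->
    (rays_compatible k [set: 'I_n] V W <->
     forall i : 'I_n,
       rays_compatible (k - 1) ([set: 'I_n] :\ i) (column i V) (column i W)).
Proof.
move=> k3 _ V W _ _; split.
- move=> Hc i x y hx hy.
  have [pi [Ha [w Hw]]] := Hc x y hx hy.
  exists (fun I => pi (i |: I)); split.
  + move=> J sJ cJ.
    have iJ : i \notin J by apply/negP => /(subsetP sJ); rewrite !inE eqxx.
    have := Ha (i |: J) (subsetT _).
    rewrite cardsU1 iJ cJ => /(_ ltac:(lia)).
    rewrite -setDDl => H.
    apply: (@ptm_shift _ _ _ _ _ (fun _ => 0) H) => a b _ _ _.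
    by rewrite !addr0 setUA.
  + exists (fun j => w j + w i / (k - 1)%:R) => I sI cI.
    have iI : i \notin I by apply/negP => /(subsetP sI); rewrite !inE eqxx.
    have := Hw (i |: I) (subsetT _).
    rewrite cardsU1 iI cI => /(_ ltac:(lia)) ->.
    rewrite big_setU1 //= big_split /=.
    rewrite sumr_const cI -(mulr_natr (w i / _)) divfK; first by ring.
    by rewrite pnatr_eq0; lia.
- move=> Hc x y hx hy.
  exists (fun I => x * V I + y * W I); split; last first.
    by exists (fun _ => 0) => I _ _; rewrite big1 // addr0.
  move=> J _ cJ.
  have : (0 < #|J|)%N by lia.
  case/card_gt0P => i iJ.
  have [p [Ha [w Hw]]] := Hc i x y hx hy.
  have sJ : J :\ i \subset [set: 'I_n] :\ i by apply: setSD; apply: subsetT.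
  have cJ' : #|J :\ i| = (k - 1 - 2)%N.
    by move: (cardsD1 i J); rewrite iJ cJ; lia.
  have := Ha _ sJ cJ'.
  have -> : [set: 'I_n] :\ i :\: (J :\ i) = [set: 'I_n] :\: J.
    apply/setP => z; rewrite !inE; case: (eqVneq z i) => [->|] //=.
    by rewrite iJ.
  move=> H.
  apply: (@ptm_shift _ _ _ _ _ (fun a => w a + (\sum_(j in J :\ i) w j) / 2%:R) H).
  move=> a b aL bL ab.
  move: aL bL; rewrite !inE /= !andbT => aJ bJ.
  have ai : a != i by apply/eqP => E; rewrite E iJ in aJ.
  have bi : b != i by apply/eqP => E; rewrite E iJ in bJ.
  have aJ' : a \notin b |: (J :\ i) by rewrite !inE negb_or ab negb_and aJ orbT.
  have bJ' : b \notin J :\ i by rewrite !inE negb_and bJ orbT.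
  have E1 : J :\ i :|: [set a; b] = a |: (b |: (J :\ i)).
    by apply/setP => z; rewrite !inE orbC -orbA.
  have sI : a |: (b |: (J :\ i)) \subset [set: 'I_n] :\ i.
    by apply/subsetP => z; rewrite !inE andbT; case/or3P => [/eqP->|/eqP->|/andP[]].
  have cI : #|a |: (b |: (J :\ i))| = (k - 1)%N.
    rewrite cardsU1 aJ' cardsU1 bJ' cJ'; lia.
  have := Hw _ sI cI.
  rewrite /column.
  have -> : i |: (a |: (b |: (J :\ i))) = J :|: [set a; b].
    apply/setP => z; rewrite !inE; case: (eqVneq z i) => [->|_] /=; first by rewrite iJ.
    by rewrite [RHS]orbC -orbA.
  move=> ->; rewrite E1 !big_setU1 //=.
  by field.
Qed.
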